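(* Let $(F,\|\cdot\|_F)$ and $(G,\|\cdot\|_G)$ be two indecomposable finite-dimensional normed spaces over $K$ with $\dim_KF\ge2$, and let $t_1,\dots,t_m,s_1,\dots,s_n>0$. Then $$(K^m,|\cdot|_{t_1}\times\cdots\times|\cdot|_{t_m})\oplus(F,\|\cdot\|_F)\cong(K^n,|\cdot|_{s_1}\times\cdots\times|\cdot|_{s_n})\oplus(G,\|\cdot\|_G)$$ if and only if $(K^m,|\cdot|_{t_1}\times\cdots\times|\cdot|_{t_m})\cong(K^n,|\cdot|_{s_1}\times\cdots\times|\cdot|_{s_n})$ and $(F,\|\cdot\|_F)\cong(G,\|\cdot\|_G)$.
   Context: $K$ is a complete non-archimedean non-trivially valued field which is not spherically complete. $(K^m,|\cdot|_{t_1}\times\cdots\times|\cdot|_{t_m})$ is $K^m$ with norm $\max_it_i|x_i|$; $\oplus$ is the direct sum with max norm; $\cong$ denotes isometric isomorphism. A normed space is decomposable if it is isometrically isomorphic to a direct sum of two nonzero normed spaces, and indecomposable otherwise. *)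

(* Defs.v *)
From HB Require Import structures.
From mathcomp Require Import all_boot all_order all_algebra.
From mathcomp Require Import reals.
Set Implicit Arguments. Unset Strict Implicit. Unset Printing Implicit Defensive.
Import Order.TTheory GRing.Theory Num.Theory.
Local Open Scope ring_scope.

Section Defs.
Variables (R : realType) (K : fieldType) (abs : K -> R).

Definition nonarch_abs : Prop :=
  [/\ forall x, 0 <= abs x,
      forall x, abs x = 0 <-> x = 0,
      forall x y, abs (x * y) = abs x * abs y &
      forall x y, abs (x + y) <= Num.max (abs x) (abs y)].

Definition nontrivial_abs : Prop := exists x : K, abs x != 0 /\ abs x != 1.

Definition complete_abs : Prop :=
  forall u : nat -> K,
    (forall e : R, 0 < e -> exists N : nat, forall p q : nat,
        (N <= p)%N -> (N <= q)%N -> abs (u p - u q) < e) ->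
    exists l : K, forall e : R, 0 < e -> exists N : nat, forall p : nat,
        (N <= p)%N -> abs (u p - l) < e.

Definition spherically_complete : Prop :=
  forall (a : nat -> K) (r : nat -> R),
    (forall k, 0 < r k) ->
    (forall k x, abs (x - a k.+1) <= r k.+1 -> abs (x - a k) <= r k) ->
    exists x : K, forall k, abs (x - a k) <= r k.

Definition is_norm (E : lmodType K) (nE : E -> R) : Prop :=
  [/\ forall x, 0 <= nE x,
      forall x, nE x = 0 <-> x = 0,
      forall (a : K) x, nE (a *: x) = abs a * nE x &
      forall x y, nE (x + y) <= Num.max (nE x) (nE y)].

Definition sum_norm (E1 E2 : lmodType K) (n1 : E1 -> R) (n2 : E2 -> R)
  : E1 * E2 -> R := fun x => Num.max (n1 x.1) (n2 x.2).

Definition wnorm (m : nat) (t : 'I_m -> R) : 'rV[K]_m -> R :=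
  fun x => \big[Num.max/0]_(i < m) (t i * abs (x 0 i)).

Definition isometric (E E' : lmodType K) (nE : E -> R) (nE' : E' -> R) : Prop :=
  exists f : E -> E', [/\ linear f, bijective f & forall x, nE' (f x) = nE x].

Definition decomposable (E : lmodType K) (nE : E -> R) : Prop :=
  exists (E1 E2 : lmodType K) (n1 : E1 -> R) (n2 : E2 -> R),
    [/\ is_norm n1, is_norm n2, exists x : E1, x != 0,
        exists y : E2, y != 0 & isometric nE (sum_norm n1 n2)].

Definition indecomposable (E : lmodType K) (nE : E -> R) : Prop :=
  ~ decomposable nE.

End Defs.

(* Main.v *)
Require Import Defs.
From HB Require Import structures.
From mathcomp Require Import all_boot all_order all_algebra.
From mathcomp Require Import reals.
From mathcomp Require Import zify.
Set Implicit Arguments. Unset Strict Implicit. Unset Printing Implicit Defensive.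
Import Order.TTheory GRing.Theory Num.Theory.
Local Open Scope ring_scope.

Definition mkLin (K : fieldType) (U V : lmodType K) (f : U -> V) (hf : linear f)
  : {linear U -> V} := HB.pack f (GRing.isLinear.Build K U V *:%R f hf).

Lemma abs0 (R : realType) (K : fieldType) (abs : K -> R) :
  nonarch_abs abs -> abs 0 = 0.
Proof. by case=> _ h _ _; apply/h. Qed.

Lemma abs1 (R : realType) (K : fieldType) (abs : K -> R) :
  nonarch_abs abs -> abs 1 = 1.
Proof.
case=> _ h hm _.
have n1 : abs 1 != 0 by apply/eqP => /h /eqP; rewrite oner_eq0.
apply: (mulfI n1); by rewrite -hm !mulr1.
Qed.

Lemma absN1 (R : realType) (K : fieldType) (abs : K -> R) :
  nonarch_abs abs -> abs (-1) = 1.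
Proof.
move=> ha; have a1 := abs1 ha; case: ha => h0 _ hm _.
have e : abs (-1) * abs (-1) = 1 by rewrite -hm mulrNN mulr1 a1.
have /orP[/eqP //|/eqP e2] : (abs (-1) == 1) || (abs (-1) == -1) by rewrite -sqrf_eq1 expr2 e.
by have := h0 (-1); rewrite e2 oppr_ge0 ler10.
Qed.

Lemma norm0 (R : realType) (K : fieldType) (abs : K -> R) (E : lmodType K) (nE : E -> R) :
  is_norm abs nE -> nE 0 = 0.
Proof. by case=> _ h _ _; apply/h. Qed.

Lemma normN (R : realType) (K : fieldType) (abs : K -> R) (E : lmodType K) (nE : E -> R) :
  nonarch_abs abs -> is_norm abs nE -> forall x, nE (- x) = nE x.
Proof. move=> ha [_ _ hs _] x; by rewrite -scaleN1r hs (absN1 ha) mul1r. Qed.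
Lemma max_eq3 (R : realType) (p q X : R) :
  p <= X -> q <= Num.max X p -> X <= Num.max q p -> Num.max p q = X.
Proof.
move=> pX; rewrite (max_l pX) => qX Xm; apply/le_anti.
by rewrite ge_max pX qX /= maxC.
Qed.

Lemma no_attain (R : realType) (K : fieldType) (abs : K -> R)
  (habs : nonarch_abs abs) (F : vectType K) (nF : F -> R)
  (hnF : is_norm abs nF) (hiF : indecomposable abs nF)
  (hdim : (2 <= \dim (fullv : {vspace F}))%N)
  (l : F -> K^o) (hl : linear l) (c : R)
  (hc : forall y, c * abs (l y) <= nF y) (f : F) (hf0 : f != 0)
  (hf : c * abs (l f) = nF f) : False.
Proof.
have [a0 aeq amul aultra] := habs.
have [n0 neq nsc nultra] := hnF.
have lf0 : l f != 0.
  apply/eqP => e; move: hf; rewrite e (abs0 habs) mulr0 => /esym /neq /eqP.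
  by rewrite (negbTE hf0).
have nf0 : nF f != 0 by apply/eqP => /neq /eqP; rewrite (negbTE hf0).
pose L := linfun (mkLin hl).
have LE : forall x, L x = l x by move=> x; rewrite /L lfunE.
pose U := lker L.
have hU : forall x, (x \in U) = (l x == 0) by move=> x; rewrite memv_ker LE.
apply: hiF.
exists (K^o), (subvs_of U), (fun a : K^o => abs a * nF f), (fun u => nF (vsval u)).
split.
- split.
  + by move=> x; rewrite mulr_ge0.
  + move=> x; split; last by move=> ->; rewrite (abs0 habs) mul0r.
    by move/eqP; rewrite mulf_eq0 (negbTE nf0) orbF => /eqP /aeq.
  + by move=> a x; rewrite amul mulrA.
  + move=> x y; rewrite -maxr_pMl //; exact: ler_wpM2r.
- split.
  + by move=> x.
  + move=> x; split; last by move=> ->; rewrite linear0 (norm0 hnF).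
    by move/neq => h; apply: (can_inj (@vsvalK _ _ U)); rewrite h linear0.
  + by move=> a x; rewrite linearZ nsc.
  + by move=> x y; rewrite linearD nultra.
- by exists 1; rewrite oner_eq0.
- have dU : (0 < \dim U)%N.
    have := limg_ker_dim L fullv; rewrite capfv.
    have : (\dim (L @: fullv) <= 1)%N.
      by apply: leq_trans (dimvS (subvf _)) _; rewrite dimvf.
    rewrite /U; move: hdim; lia.
  exists (vsproj U (vpick U)).
  rewrite -(inj_eq (can_inj (@vsvalK _ _ U))) linear0 vsprojK ?memv_pick // vpick0 -dimv_eq0.
  by rewrite -lt0n.
have lK : forall x, l (x - (l x / l f) *: f) = 0.
  move=> x; rewrite -LE linearB linearZ /= !LE.
  by change ((l x / l f) *: l f) with (l x / l f * l f); rewrite mulfVK // subrr.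
exists (fun x => ((l x / l f : K^o), vsproj U (x - (l x / l f) *: f))).
split.
- move=> a x y /=.
  have -> : l (a *: x + y) = a * l x + l y by rewrite -!LE linearP.
  apply: injective_projections => /=.
    by change (a *: (l x / l f)) with (a * (l x / l f)); rewrite mulrDl mulrA.
  rewrite -linearP; congr vsproj.
  rewrite mulrDl scalerDl scalerBr scalerA mulrA.
  set u := (_ *: f); set v := (_ *: f).
  rewrite opprD !addrA; congr (_ + _); rewrite -!addrA; congr (_ + _).
  by rewrite addrC.
- exists (fun p : K^o * subvs_of U => p.1 *: f + vsval p.2).
  + move=> x /=; rewrite vsprojK ?hU ?lK //.
    by rewrite addrC subrK.
  + move=> [a u] /=.
    have lu : l (vsval u) = 0 by apply/eqP; rewrite -hU subvsP.
    have -> : l (a *: f + vsval u) = a * l f by rewrite -LE linearP /= !LE lu addr0.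
    by rewrite mulfK // addrC addKr vsvalK.
- move=> x; rewrite /sum_norm /= vsprojK ?hU ?lK //.
  set a := l x / l f.
  have pX : abs a * nF f <= nF x.
    by rewrite -hf mulrCA -amul mulfVK.
  apply: max_eq3 => //.
  + apply: le_trans (nultra _ _) _.
    by rewrite (normN habs hnF) nsc.
  + rewrite -{1}(subrK (a *: f) x) -nsc.
    exact: nultra.
Qed.

Lemma bigmax_attain (R : realType) (n : nat) (Fn : 'I_n -> R) :
  0 < \big[Num.max/0]_(i < n) Fn i ->
  exists i, Fn i = \big[Num.max/0]_(i < n) Fn i.
Proof.
move=> hM; case: (boolP [exists i, Fn i == \big[Num.max/0]_(i < n) Fn i]).
  by move/existsP => [i /eqP e]; exists i.
move/existsPn => hne; have : \big[Num.max/0]_(i < n) Fn i < \big[Num.max/0]_(i < n) Fn i.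
  apply: bigmax_lt => // i _; rewrite lt_neqAle hne /=.
  exact: (le_bigmax 0 Fn i).
by move=> h; move: h (h); rewrite {1}lt_irreflexive.
Qed.

Lemma wnorm_ge0 (R : realType) (K : fieldType) (abs : K -> R) m (t : 'I_m -> R) x :
  0 <= wnorm abs t x.
Proof.
by rewrite /wnorm bigmax_idl le_max lexx.
Qed.

Lemma wnorm0 (R : realType) (K : fieldType) (abs : K -> R) m (t : 'I_m -> R) :
  nonarch_abs abs -> wnorm abs t 0 = 0.
Proof.
move=> ha; apply/le_anti; rewrite wnorm_ge0 andbT /wnorm.
apply: bigmax_le => // i _; by rewrite mxE (abs0 ha) mulr0.
Qed.

Lemma wnorm_le (R : realType) (K : fieldType) (abs : K -> R) m (t : 'I_m -> R) (x : 'rV[K]_m) j :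
  t j * abs (x 0 j) <= wnorm abs t x.
Proof. exact: (le_bigmax 0 (fun i => t i * abs (x 0 i))). Qed.

Lemma beta_norm (R : realType) (K : fieldType) (abs : K -> R)
  (habs : nonarch_abs abs)
  (F G : vectType K) (nF : F -> R) (nG : G -> R)
  (hnF : is_norm abs nF) (hnG : is_norm abs nG)
  (hiF : indecomposable abs nF)
  (hdim : (2 <= \dim (fullv : {vspace F}))%N)
  (m n : nat) (t : 'I_m -> R) (s : 'I_n -> R)
  (phi : 'rV[K]_m * F -> 'rV[K]_n * G) (hl : linear phi)
  (hn : forall x, sum_norm (wnorm abs s) nG (phi x) = sum_norm (wnorm abs t) nF x) :
  forall f, nG (phi (0, f)).2 = nF f.
Proof.
have [n0 neq nsc nultra] := hnF.
have [g0 geq gsc gultra] := hnG.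
have hn0 : forall y, Num.max (wnorm abs s (phi (0, y)).1) (nG (phi (0, y)).2) = nF y.
  by move=> y; have := hn (0, y); rewrite /sum_norm /= wnorm0 // (max_r (n0 y)).
move=> f; apply/le_anti; apply/andP; split.
  by rewrite -hn0 le_max lexx orbT.
rewrite leNgt; apply/negP => hlt.
have e : wnorm abs s (phi (0, f)).1 = nF f.
  have := hn0 f; case: (leP (wnorm abs s (phi (0, f)).1) (nG (phi (0, f)).2)) => h ehh //.
  by move: hlt; rewrite ehh => hh; move: hh (hh); rewrite {1}lt_irreflexive.
have pos : 0 < nF f by apply: le_lt_trans hlt.
have [j ej] : exists j, s j * abs ((phi (0, f)).1 0 j) = nF f.
  by rewrite -e; apply: bigmax_attain; rewrite -/(wnorm abs s _) e.
pose l := fun y : F => ((phi (0, y)).1 0 j : K^o).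
have hll : linear l.
  move=> a x y; rewrite /l.
  have -> : ((0 : 'rV[K]_m), a *: x + y) = a *: (0, x) + (0, y).
    by apply: injective_projections => /=; rewrite ?scaler0 ?addr0.
  by rewrite hl /= !mxE.
eapply (no_attain habs hnF hiF hdim hll) with (c := s j) (f := f) => //.
- move=> y; rewrite /l; apply: le_trans (wnorm_le _ _ _ _) _.
  by rewrite -hn0 le_max lexx.
- by apply/eqP => f0; move: pos; rewrite f0 (norm0 hnF) ltxx.
Qed.

Lemma inj_of_norm (R : realType) (K : fieldType) (abs : K -> R)
  (U V : lmodType K) (nU : U -> R) (nV : V -> R) (hnU : is_norm abs nU)
  (h : U -> V) (hl : linear h) (hn : forall x, nV (h x) = nU x)
  (hV0 : nV 0 = 0) : injective h.
Proof.
move=> x y e; apply/eqP; rewrite -subr_eq0; apply/eqP.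
case: hnU => _ neq _ _; apply/neq; rewrite -hn.
have -> : h (x - y) = mkLin hl (x - y) by [].
by rewrite linearB /= e subrr.
Qed.

Lemma dim_inj (K : fieldType) (F G : vectType K) (h : F -> G) (hl : linear h)
  (hi : injective h) : (\dim (fullv : {vspace F}) <= \dim (fullv : {vspace G}))%N.
Proof.
pose L := linfun (mkLin hl).
have LE : forall x, L x = h x by move=> x; rewrite /L lfunE.
have k0 : lker L == 0%VS by apply/lker0P => x y; rewrite !LE => /hi.
rewrite -(limg_dim_eq (U := fullv) (f := L)); last by rewrite (eqP k0) capv0.
exact: dimvS (subvf _).
Qed.

Theorem mainTheorem14 (R : realType) (K : fieldType) (abs : K -> R)
  (habs : nonarch_abs abs) (hnt : nontrivial_abs abs) (hc : complete_abs abs)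
  (hsc : ~ spherically_complete abs)
  (F G : vectType K) (nF : F -> R) (nG : G -> R)
  (hnF : is_norm abs nF) (hnG : is_norm abs nG)
  (hiF : indecomposable abs nF) (hiG : indecomposable abs nG)
  (hdim : (2 <= \dim (fullv : {vspace F}))%N)
  (m n : nat) (t : 'I_m -> R) (s : 'I_n -> R)
  (ht : forall i, 0 < t i) (hs : forall j, 0 < s j) :
  isometric (sum_norm (wnorm abs t) nF) (sum_norm (wnorm abs s) nG)
  <-> isometric (wnorm abs t) (wnorm abs s) /\ isometric nF nG.
Proof.
split; last first.
  move=> [[f1 [l1 [g1 c1 c1'] n1]] [f2 [l2 [g2 c2 c2'] n2]]].
  exists (fun x => (f1 x.1, f2 x.2)); split.
  - by move=> a [x1 x2] [y1 y2] /=; rewrite l1 l2.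
  - exists (fun y => (g1 y.1, g2 y.2)).
      by move=> [x1 x2] /=; rewrite c1 c2.
    by move=> [x1 x2] /=; rewrite c1' c2'.
  - by move=> [x1 x2]; rewrite /sum_norm /= n1 n2.
move=> [phi [hl [psi c1 c2] hn]].
have hpl : linear psi := can2_linear (f := mkLin hl) c1 c2.
have hpn : forall y, sum_norm (wnorm abs t) nF (psi y) = sum_norm (wnorm abs s) nG y.
  by move=> y; rewrite -{2}(c2 y) hn.
pose beta := fun f : F => (phi (0, f)).2.
have hbn : forall f, nG (beta f) = nF f := beta_norm habs hnF hnG hiF hdim hl hn.
have hbl : linear beta.
  move=> a x y; rewrite /beta.
  have -> : ((0 : 'rV[K]_m), a *: x + y) = a *: (0, x) + (0, y).
    by apply: injective_projections => /=; rewrite ?scaler0 ?addr0.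
  by rewrite hl.
have hbi : injective beta := inj_of_norm hnF hbl hbn (norm0 hnG).
have dFG := dim_inj hbl hbi.
have hdimG : (2 <= \dim (fullv : {vspace G}))%N by apply: leq_trans dFG.
pose beta' := fun g : G => (psi (0, g)).2.
have hbn' : forall g, nF (beta' g) = nG g := beta_norm habs hnG hnF hiG hdimG hpl hpn.
have hbl' : linear beta'.
  move=> a x y; rewrite /beta'.
  have -> : ((0 : 'rV[K]_n), a *: x + y) = a *: (0, x) + (0, y).
    by apply: injective_projections => /=; rewrite ?scaler0 ?addr0.
  by rewrite hpl.
have hbi' : injective beta' := inj_of_norm hnG hbl' hbn' (norm0 hnF).
have dGF := dim_inj hbl' hbi'.
pose L := linfun (mkLin hbl).
have LE : forall x, L x = beta x by move=> x; rewrite /L lfunE.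
have imL : limg L = fullv.
  apply/eqP; rewrite eqEdim subvf /=.
  have k0 : lker L == 0%VS by apply/lker0P => x y; rewrite !LE => /hbi.
  rewrite limg_dim_eq; last by rewrite (eqP k0) capv0.
  by apply: leq_trans dGF _.
pose binv := fun g : G => (L^-1)%VF g.
have cb1 : forall g, beta (binv g) = g.
  by move=> g; rewrite -LE /binv limg_lfunVK // imL memvf.
have cb2 : forall f, binv (beta f) = f.
  by move=> f; apply: hbi; rewrite cb1.
split; last first.
  by exists beta; split => //; exists binv.
pose h := fun a : 'rV[K]_m => (phi (a, - binv ((phi (a, 0)).2))).1.
pose k := fun b : 'rV[K]_n => (psi (b, 0)).1.
have hz : forall a, phi (a, - binv ((phi (a, 0)).2)) = (h a, 0).
  move=> a; rewrite /h.
  set f' := binv _.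
  have -> : (a, - f') = (a, 0) - (0, f').
    by apply: injective_projections => /=; rewrite ?subr0 ?sub0r.
  have -> : phi ((a, 0) - (0, f')) = phi (a, 0) - phi (0, f').
    by have -> : phi ((a, 0) - (0, f')) = mkLin hl ((a, 0) - (0, f')) by []; rewrite linearB.
  apply: injective_projections => //=.
  by rewrite -/(beta f') cb1 subrr.
have hkl : linear k.
  move=> a x y; rewrite /k.
  have -> : (a *: x + y, (0 : G)) = a *: (x, 0) + (y, 0).
    by apply: injective_projections => /=; rewrite ?scaler0 ?addr0.
  by rewrite hpl.
have ckh : forall a, k (h a) = a.
  by move=> a; rewrite /k -hz c1.
have chk : forall b, h (k b) = b.
  move=> b; rewrite /k; case E: (psi (b, 0)) => [a f] /=.
  have hp : phi (a, f) = (b, 0) by rewrite -E c2.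
  have e1 : (phi (a, 0)).2 = beta (- f).
    have -> : ((a, 0) : 'rV[K]_m * F) = (a, f) + (0, - f).
      by apply: injective_projections => /=; rewrite ?addr0 ?subrr.
    by have -> : phi ((a, f) + (0, - f)) = mkLin hl ((a, f) + (0, - f)) by []; rewrite linearD /= hp /= add0r.
  by rewrite /h e1 cb2 opprK hp.
have hhl : linear h := can2_linear (f := mkLin hkl) chk ckh.
exists h; split => //.
  by exists k.
move=> a.
have := hn (a, - binv ((phi (a, 0)).2)); rewrite hz /sum_norm /= (norm0 hnG).
rewrite (max_l (wnorm_ge0 _ _ _)) => ->.
apply: max_l; rewrite (normN habs hnF) -hbn cb1.
have := hn (a, 0); rewrite /sum_norm /= (norm0 hnF) (max_l (wnorm_ge0 _ _ _)) => <-.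
by rewrite le_max lexx orbT.
Qed.
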